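(* Let $n\ge1$, let $C_{2n}$ be the cyclic group of order $2n$ generated by the rotation $j\mapsto j+1\pmod{2n}$ of $[2n]$, and let $D_{2n}$ be the dihedral group of order $4n$ of symmetries of the $2n$-gon, generated by this rotation and the reflection $j\mapsto -j \pmod{2n}$. Let $c_n$ and $d_n$ be the numbers of equivalence classes of $n$-diagrams under the actions of $C_{2n}$ and $D_{2n}$ respectively. Then \[ d_n = \frac{1}{2} \Big( c_n + \frac{1}{2} \big( \kappa_{n - 1} + \kappa_n \big) \Big), \qquad\text{where}\qquad \kappa_m = \sum_{k = 0}^{\lfloor m/2 \rfloor} \frac{m!}{k! \, (m - 2k)!}. \]
   Context: A chord diagram of order $n$ (an $n$-diagram) is a 3-regular graph on vertex set $[2n]=\{1,\dots,2n\}$ containing the $2n$-circuit $\Delta_{2n}=(1\,2\,\dots\,2n)$ as a subgraph; the edges not in $\Delta_{2n}$ are the chords (they form a perfect matching of $[2n]$). Given a group $G$ of permutations of $[2n]$ acting on $\Delta_{2n}$, two $n$-diagrams are equivalent if some $g\in G$ takes the chords of the first onto the chords of the second. *)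

(* Defs.v *)
From mathcomp Require Import all_boot all_order all_fingroup all_algebra.
Set Implicit Arguments. Unset Strict Implicit. Unset Printing Implicit Defensive.
Import GRing.Theory Num.Theory.

(* Vertices of the 2n-circuit: 'I_(2n) = {0,...,2n-1} (label j stands for j+1
   of the paper; 2n is identified with 0 mod 2n). *)

Lemma ord_pos m (x : 'I_m) : 0 < m.
Proof. exact: leq_ltn_trans (leq0n x) (ltn_ord x). Qed.

Definition rot_fun m (x : 'I_m) : 'I_m :=
  Ordinal (ltn_pmod x.+1 (ord_pos x)).
Definition refl_fun m (x : 'I_m) : 'I_m :=
  Ordinal (ltn_pmod (m - x) (ord_pos x)).

Lemma rot_fun_inj m : injective (@rot_fun m).
Proof.
move=> x y /(congr1 val) /= h; apply: val_inj => /=.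
rewrite -(modn_small (ltn_ord x)) -(modn_small (ltn_ord y)).
apply/eqP; rewrite -(eqn_modDr 1) !addn1; exact/eqP.
Qed.

Lemma refl_fun_inj m : injective (@refl_fun m).
Proof.
move=> x y /(congr1 val) /= h; apply: val_inj => /=.
rewrite -(modn_small (ltn_ord x)) -(modn_small (ltn_ord y)).
have hx := ltn_ord x; have hy := ltn_ord y.
have h2 : (m - x + (x + y) = m - y + (x + y) %[mod m])%N.
  by rewrite -(modnDml (m - x)) h modnDml.
move: h2; rewrite !addnA subnK ?(ltnW hx) // -addnA (addnC x) addnA.
by rewrite subnK ?(ltnW hy) // !modnDl => ->.
Qed.

Definition rot m : {perm 'I_m} := perm (@rot_fun_inj m).
Definition refl m : {perm 'I_m} := perm (@refl_fun_inj m).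

Definition Cgrp m : {set {perm 'I_m}} := <<[set rot m]>>%g.
Definition Dgrp m : {set {perm 'I_m}} := <<[set rot m; refl m]>>%g.

(* chord set of a diagram: a perfect matching of the vertex set *)
Definition perfect_matching m (M : {set {set 'I_m}}) : bool :=
  [forall e in M, #|e| == 2] && [forall x : 'I_m, #|[set e in M | x \in e]| == 1].

Definition act_chords m (g : {perm 'I_m}) (M : {set {set 'I_m}}) : {set {set 'I_m}} :=
  [set (fun x => g x) @: e | e : {set 'I_m} in M].

Definition chord_class m (G : {set {perm 'I_m}}) (M : {set {set 'I_m}}) :=
  [set act_chords g M | g in G].

Definition num_classes n (G : {set {perm 'I_(2 * n)}}) : nat :=
  #|[set chord_class G M | M in [set M | perfect_matching M]]|.

Definition c_n n := num_classes (Cgrp (2 * n)).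
Definition d_n n := num_classes (Dgrp (2 * n)).

Local Open Scope ring_scope.
Definition kappa (m : nat) : rat :=
  \sum_(0 <= k < (m./2).+1) (m`!)%:R / ((k`!)%:R * ((m - k.*2)`!)%:R).

(* Main.v *)
Require Import Defs.
From mathcomp Require Import all_boot all_order all_fingroup all_algebra.
From mathcomp Require Import zify ring lra.
Import Defs.
Set Implicit Arguments. Unset Strict Implicit. Unset Printing Implicit Defensive.

Definition pf (T : finType) (S : {set T}) (f : {ffun T -> T}) : bool :=
  [forall x, if x \in S then [&& f x \in S, f x != x & f (f x) == x] else f x == x].
Definition commb (T : finType) (s : T -> T) (f : {ffun T -> T}) : bool :=
  [forall x, f (s x) == s (f x)].
Definition NN (T : finType) (s : T -> T) (S : {set T}) :=
  #|[set f : {ffun T -> T} | pf S f && commb s f]|.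

Lemma pfP (T : finType) (S : {set T}) (f : {ffun T -> T}) :
  reflect ((forall x, x \in S -> [/\ f x \in S, f x != x & f (f x) = x]) /\
           (forall x, x \notin S -> f x = x)) (pf S f).
Proof.
apply: (iffP forallP) => [H|[H1 H2] x].
  split=> x; have := H x; case: (x \in S) => //.
    by case/and3P => -> -> /eqP.
  by move=> /eqP.
case: ifP => xS; last by rewrite H2 ?xS.
by case: (H1 x xS) => -> -> ->; rewrite eqxx.
Qed.

Lemma commbP (T : finType) (s : T -> T) (f : {ffun T -> T}) :
  reflect (forall x, f (s x) = s (f x)) (commb s f).
Proof. by apply: (iffP forallP) => H x; apply/eqP. Qed.

Lemma card_bij (A B : finType) (P : {set A}) (Q : {set B}) (f : A -> B) (g : B -> A) :
  {in P, forall x, f x \in Q} -> {in Q, forall y, g y \in P} ->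
  {in P, cancel f g} -> {in Q, cancel g f} -> #|P| = #|Q|.
Proof.
move=> fPQ gQP fK gK; apply/eqP; rewrite eqn_leq; apply/andP; split.
  rewrite -(card_in_imset (f := f)); last by move=> x y xP yP e; rewrite -(fK x xP) e fK.
  by apply: subset_leq_card; apply/subsetP => _ /imsetP[x xP ->]; apply: fPQ.
rewrite -(card_in_imset (f := g)); last by move=> x y xP yP e; rewrite -(gK x xP) e gK.
by apply: subset_leq_card; apply/subsetP => _ /imsetP[x xP ->]; apply: gQP.
Qed.

Lemma NN_remove (T : finType) (s : T -> T) (S R : {set T}) (h : T -> T) :
  (forall x, s (s x) = x) ->
  R \subset S ->
  (forall x, x \in R -> s x \in R) ->
  (forall x, x \in R -> [/\ h x \in R, h x != x, h (h x) = x & h (s x) = s (h x)]) ->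
  #|[set f : {ffun T -> T} | [&& pf S f, commb s f & [forall x in R, f x == h x]]]|
   = NN s (S :\: R).
Proof.
move=> sK RS sR hR.
have sRE x : (s x \in R) = (x \in R).
  apply/idP/idP => [/sR|/sR //]; by rewrite sK.
rewrite /NN.
apply: (@card_bij _ _ _ _ (fun f : {ffun T -> T} => [ffun x => if x \in R then x else f x])
                 (fun g : {ffun T -> T} => [ffun x => if x \in R then h x else g x])).
- move=> f; rewrite !inE => /and3P[/pfP[H1 H2] /commbP Hc /forallP Ha].
  have Ha' x : x \in R -> f x = h x by move=> xR; have := Ha x; rewrite xR => /eqP.
  apply/andP; split.
    apply/pfP; split => x.
      rewrite !inE => /andP[xR xS]; rewrite !ffunE (negbTE xR).
      case: (H1 x xS) => fxS fxx ffx.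
      have fxR : f x \notin R.
        apply/negP => fxR; move: xR; rewrite -ffx Ha' //.
        by case: (hR _ fxR) => ->.
      by rewrite (negbTE fxR) ffx fxx fxS.
    rewrite !inE negb_and negbK ffunE; case: ifP => // xR /= xS.
    by rewrite H2.
  apply/commbP => x; rewrite !ffunE sRE; case: ifP => // _; exact: Hc.
- move=> g; rewrite !inE => /andP[/pfP[H1 H2] /commbP Hc].
  apply/and3P; split.
  + apply/pfP; split => x.
      move=> xS; rewrite !ffunE; case: ifP => xR.
        case: (hR x xR) => hxR hxx hhx _; rewrite hxR hhx.
        by rewrite (subsetP RS _ hxR) hxx.
      have xSR : x \in S :\: R by rewrite inE xR xS.
      case: (H1 x xSR) => gxS gxx ggx; move: gxS; rewrite inE => /andP[gxR gxS].
      by rewrite (negbTE gxR) ggx gxS gxx.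
    move=> xS; have xR : x \notin R by apply: contra xS; apply: (subsetP RS).
    rewrite ffunE (negbTE xR) H2 // inE negb_and xS orbT //.
  + apply/commbP => x; rewrite !ffunE sRE; case: ifP => xR.
      by case: (hR x xR).
    exact: Hc.
  + by apply/forallP => x; apply/implyP => xR; rewrite ffunE xR.
- move=> f; rewrite !inE => /and3P[_ _ /forallP Ha].
  apply/ffunP => x; rewrite !ffunE; case: (boolP (x \in R)) => xR.
    by have := Ha x; rewrite xR => /eqP.
  by rewrite ?ffunE ?(negbTE xR).
- move=> g; rewrite !inE => /andP[/pfP[H1 H2] _].
  apply/ffunP => x; rewrite !ffunE; case: (boolP (x \in R)) => xR.
    by rewrite H2 // inE xR.
  by rewrite ?ffunE ?(negbTE xR).
Qed.

Definition hab (T : eqType) (s : T -> T) (a b : T) (x : T) : T :=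
  if x == a then b else if x == b then a else if x == s a then s b else s a.
Definition Rab (T : finType) (s : T -> T) (a b : T) : {set T} :=
  a |: (b |: (s a |: [set s b])).

Lemma hab_ok (T : finType) (s : T -> T) a b : (forall x, s (s x) = x) ->
  a != b -> s a != a -> s b != b ->
  forall x, x \in Rab s a b ->
  [/\ hab s a b x \in Rab s a b, hab s a b x != x,
      hab s a b (hab s a b x) = x & hab s a b (s x) = s (hab s a b x)].
Proof.
move=> sK ab sa sb.
have sinj : injective s := can_inj sK.
have sab : s a != s b by rewrite (inj_eq sinj).
case: (eqVneq b (s a)) ab sb sab => [->|bsa] ab sb sab.
  rewrite sK in sab.
  have e1 : (s a == a) = false by apply/negbTE.
  have e2 : (a == s a) = false by rewrite eq_sym.
  move=> x; rewrite /Rab !inE => /orP[/eqP->|/orP[/eqP->|/orP[/eqP->|/eqP->]]];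
    rewrite /hab; do 4! rewrite ?sK ?eqxx ?e1 ?e2 ?eqxx ?orbT //=.
have asb : a != s b by apply: contra bsa => /eqP->; rewrite sK.
have e1 : (s a == a) = false by apply/negbTE.
have e2 : (a == s a) = false by rewrite eq_sym.
have e3 : (s b == b) = false by apply/negbTE.
have e4 : (b == s b) = false by rewrite eq_sym.
have e5 : (a == b) = false by apply/negbTE.
have e6 : (b == a) = false by rewrite eq_sym.
have e7 : (b == s a) = false by apply/negbTE.
have e8 : (s a == b) = false by rewrite eq_sym.
have e9 : (a == s b) = false by apply/negbTE.
have e10 : (s b == a) = false by rewrite eq_sym.
have e11 : (s a == s b) = false by apply/negbTE.
have e12 : (s b == s a) = false by rewrite eq_sym.
move=> x; rewrite /Rab !inE => /orP[/eqP->|/orP[/eqP->|/orP[/eqP->|/eqP->]]];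
  rewrite /hab; do 4! rewrite ?sK ?eqxx ?e1 ?e2 ?e3 ?e4 ?e5 ?e6 ?e7 ?e8 ?e9 ?e10 ?e11 ?e12 ?eqxx ?orbT //=.
Qed.

Lemma agree_hab (T : finType) (s : T -> T) (S : {set T}) (f : {ffun T -> T}) a b :
  (forall x, s (s x) = x) -> a \in S -> (forall x, x \in S -> s x != x) ->
  pf S f -> commb s f -> f a = b ->
  forall x, x \in Rab s a b -> f x = hab s a b x.
Proof.
move=> sK aS fS /pfP[H1 _] /commbP Hc fab.
have sa := fS a aS.
case: (H1 a aS) => bS faa ffa; rewrite fab in bS.
have sb := fS b bS.
have ab : a != b by rewrite -fab eq_sym.
have fb : f b = a by rewrite -fab.
have sinj : injective s := can_inj sK.
move=> x; rewrite /Rab !inE => /orP[/eqP->|/orP[/eqP->|/orP[/eqP->|/eqP->]]];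
  rewrite /hab.
- by rewrite eqxx.
- by rewrite eq_sym (negbTE ab) eqxx.
- rewrite (negbTE sa) Hc fab; case: eqP => [<-|_]; first by rewrite sK.
  by rewrite eqxx.
- rewrite Hc fb; case: eqP => [e|_]; first by rewrite -e sK.
  rewrite (negbTE sb).
  by rewrite (inj_eq sinj) eq_sym (negbTE ab).
Qed.

Lemma NN_split (T : finType) (s : T -> T) (S : {set T}) a : a \in S ->
  NN s S = \sum_(b in S :\ a) #|[set f : {ffun T -> T} | [&& pf S f, commb s f & f a == b]]|.
Proof.
move=> aS; rewrite /NN -sum1_card.
rewrite (partition_big (fun f : {ffun T -> T} => f a) (mem (S :\ a))) /=.
  apply: eq_bigr => b _; rewrite sum1_card; apply: eq_card => f.
  by rewrite unfold_in !inE andbA.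
move=> f; rewrite inE => /andP[/pfP[H1 _] _].
by case: (H1 a aS) => fS fa _; rewrite !inE fS fa.
Qed.

Fixpoint K (p : nat) : nat :=
  match p with 0 => 1 | S p' => match p' with 0 => 1 | S q => K p' + p'.*2 * K q end end.

Lemma NN_empty (T : finType) (s : T -> T) : NN s set0 = 1.
Proof.
rewrite /NN -(cards1 [ffun x : T => x]); apply: eq_card => f; rewrite !inE.
apply/idP/eqP.
  by case/andP => /pfP[_ H2] _; apply/ffunP => x; rewrite ffunE H2 ?inE.
move=> ->; apply/andP; split.
  by apply/pfP; split => x; rewrite ?inE // ffunE.
by apply/commbP => x; rewrite !ffunE.
Qed.

Lemma Rab_sub (T : finType) (s : T -> T) (S : {set T}) a b :
  a \in S -> b \in S -> (forall x, x \in S -> s x \in S) -> Rab s a b \subset S.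
Proof.
move=> aS bS sS; apply/subsetP => x; rewrite /Rab !inE.
by case/orP => [/eqP->|/orP[/eqP->|/orP[/eqP->|/eqP->]]]; rewrite ?sS.
Qed.

Lemma Rab_closed (T : finType) (s : T -> T) a b : (forall x, s (s x) = x) ->
  forall x, x \in Rab s a b -> s x \in Rab s a b.
Proof.
move=> sK x; rewrite /Rab !inE.
by case/orP => [/eqP->|/orP[/eqP->|/orP[/eqP->|/eqP->]]]; rewrite ?sK eqxx ?orbT.
Qed.

Lemma card_Rab1 (T : finType) (s : T -> T) a : (forall x, s (s x) = x) -> s a != a ->
  #|Rab s a (s a)| = 2.
Proof.
move=> sK sa; rewrite /Rab sK !cardsU1 cards1 !inE eqxx /= eq_sym (negbTE sa).
by rewrite ?eqxx ?orbT.
Qed.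

Lemma card_Rab2 (T : finType) (s : T -> T) a b : (forall x, s (s x) = x) ->
  s a != a -> s b != b -> a != b -> b != s a -> #|Rab s a b| = 4.
Proof.
move=> sK sa sb ab bsa.
have sinj : injective s := can_inj sK.
have asb : a != s b by apply: contra bsa => /eqP->; rewrite sK.
rewrite /Rab !cardsU1 cards1 !inE (negbTE ab) (negbTE asb) eq_sym (negbTE sa).
rewrite (negbTE bsa) eq_sym (negbTE sb) (inj_eq sinj) (negbTE ab).
by rewrite ?eqxx ?orbT.
Qed.

Lemma sub_ok (T : finType) (s : T -> T) (S R : {set T}) : (forall x, s (s x) = x) ->
  (forall x, x \in R -> s x \in R) ->
  (forall x, x \in S -> s x \in S) -> (forall x, x \in S -> s x != x) ->
  (forall x, x \in S :\: R -> s x \in S :\: R) /\ (forall x, x \in S :\: R -> s x != x).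
Proof.
move=> sK sR sS fS; split => x; rewrite inE => /andP[xR xS].
  rewrite inE sS // andbT; apply: contra xR => /sR; by rewrite sK.
exact: fS.
Qed.

Lemma NN_fpf (T : finType) (s : T -> T) : (forall x, s (s x) = x) ->
  forall p (S : {set T}), #|S| = p.*2 -> (forall x, x \in S -> s x \in S) ->
  (forall x, x \in S -> s x != x) -> NN s S = K p.
Proof.
move=> sK p; elim/ltn_ind: p => p IH S cS sS fS.
case: p IH cS => [|p] IH cS.
  by move/eqP: cS; rewrite cards_eq0 => /eqP->; rewrite NN_empty.
have: S != set0 by rewrite -card_gt0 cS.
case/set0Pn => a aS.
have saS := sS a aS; have sa := fS a aS.
have sinj : injective s := can_inj sK.
have step b : b \in S :\ a -> #|[set f : {ffun T -> T} | [&& pf S f, commb s f & f a == b]]|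
     = NN s (S :\: Rab s a b).
  move=> /setD1P[ba bS].
  have sb := fS b bS.
  rewrite -(NN_remove (h := hab s a b) sK).
  - apply: eq_card => f; rewrite !inE.
    apply/and3P/and3P => [[P C /eqP E]|[P C /forallP A]]; split => //.
      apply/forallP => x; apply/implyP => xR.
      by rewrite (agree_hab sK aS fS P C E).
    by have := A a; rewrite /Rab !inE eqxx /= => /eqP->; rewrite /hab eqxx.
  - exact: Rab_sub.
  - exact: Rab_closed.
  - by apply: hab_ok; rewrite // eq_sym.
have cardR b : b \in S -> #|S :\: Rab s a b| = #|S| - #|Rab s a b|.
  by move=> bS; rewrite cardsD; have /setIidPr -> := Rab_sub aS bS sS.
rewrite (NN_split s aS) (big_setD1 (s a)); last by rewrite !inE saS sa.
rewrite step; last by rewrite !inE saS sa.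
have [cS1 fS1] := sub_ok sK (Rab_closed sK (a := a) (b := s a)) sS fS.
rewrite (IH p) //; last by rewrite cardR // card_Rab1 // cS; lia.
rewrite (eq_bigr (fun _ => K p.-1)); last first.
  move=> b; rewrite !inE => /and3P[bsa ba bS].
  have sb := fS b bS.
  have ab : a != b by rewrite eq_sym.
  have c4 := card_Rab2 sK sa sb ab bsa.
  have c4' : 4 <= p.+1.*2.
    by rewrite -cS -c4; apply: subset_leq_card; apply: Rab_sub.
  rewrite step; last by rewrite !inE ba bS.
  have [cS2 fS2] := sub_ok sK (Rab_closed sK (a := a) (b := b)) sS fS.
  rewrite (IH p.-1) //; first lia.
  by rewrite cardR // c4 cS; lia.
rewrite sum_nat_const.
have e : #|S :\ a :\ s a| = p.*2.
  have := cardsD1 a S; have := cardsD1 (s a) (S :\ a).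
  rewrite aS !inE saS sa cS /=; lia.
rewrite e; case: p {IH cS e cS1 fS1} => [|p] //=.
Qed.

Lemma NN_two (T : finType) (s : T -> T) (S : {set T}) u v : (forall x, s (s x) = x) ->
  u \in S -> v \in S -> u != v -> s u = u -> s v = v ->
  (forall x, x \in S -> x != u -> x != v -> s x != x) ->
  NN s S = NN s (S :\: [set u; v]).
Proof.
move=> sK uS vS uv su sv fS.
have R_ok : forall x, x \in [set u; v] -> s x \in [set u; v].
  by move=> x /set2P[]->; rewrite ?su ?sv ?set21 ?set22.
rewrite -(NN_remove (h := fun x => if x == u then v else u) sK) //; first last.
- have vu : (v == u) = false by rewrite eq_sym (negbTE uv).
  move=> x /set2P[]->; rewrite ?su ?sv ?eqxx ?vu ?eqxx ?set21 ?set22;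
    split => //; by rewrite eq_sym.
- by apply/subsetP => x /set2P[]->.
rewrite /NN; apply: eq_card => f; rewrite !inE.
apply/andP/and3P => [[P C]|[P C _]]; split => //.
have [/pfP[H1 _] /commbP Hc] := (P, C).
case: (H1 u uS) => fuS fuu ffu.
have fuv : f u = v.
  apply/eqP; apply: contraTT (fuu) => fv.
  have := fS (f u) fuS fuu fv; by rewrite -Hc su eqxx.
apply/forallP => x; apply/implyP => /set2P[]->; first by rewrite eqxx fuv.
by rewrite (eq_sym v u) (negbTE uv) -{1}fuv ffu.
Qed.

Lemma pfTP (T : finType) (f : {ffun T -> T}) :
  reflect (forall x, f x != x /\ f (f x) = x) (pf setT f).
Proof.
apply: (iffP (pfP _ _)) => [[H1 _] x|H]; first by case: (H1 x (in_setT x)).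
by split => x; rewrite ?in_setT // => _; case: (H x) => -> ->; rewrite ?in_setT.
Qed.

Definition Phi m (f : {ffun 'I_m -> 'I_m}) : {set {set 'I_m}} :=
  [set [set x; f x] | x : 'I_m].

Lemma Phi_mem m (f : {ffun 'I_m -> 'I_m}) x : pf setT f ->
  [set e in Phi f | x \in e] = [set [set x; f x]].
Proof.
move=> /pfTP H; apply/setP => e; rewrite !inE; apply/andP/eqP => [[/imsetP[y _ ->]]|->].
  case/set2P => [->//|->]; have [_ ->] := H y; exact: setUC.
by split; [apply: imset_f | apply: set21].
Qed.

Lemma Phi_pm m (f : {ffun 'I_m -> 'I_m}) : pf setT f -> perfect_matching (Phi f).
Proof.
move=> P; have /pfTP H := P; apply/andP; split.
  by apply/forallP => e; apply/implyP => /imsetP[x _ ->]; rewrite cards2 (eq_sym x) (proj1 (H x)).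
by apply/forallP => x; rewrite Phi_mem // cards1.
Qed.

Lemma pm_uniq m (M : {set {set 'I_m}}) x e1 e2 : perfect_matching M ->
  e1 \in M -> e2 \in M -> x \in e1 -> x \in e2 -> e1 = e2.
Proof.
case/andP => _ /forallP /(_ x) /cards1P[e He] e1M e2M x1 x2.
have : e1 \in [set e in M | x \in e] by rewrite inE e1M x1.
have : e2 \in [set e in M | x \in e] by rewrite inE e2M x2.
by rewrite He !inE => /eqP-> /eqP->.
Qed.

Lemma pm_edge m (M : {set {set 'I_m}}) e : perfect_matching M -> e \in M ->
  exists u v, u != v /\ e = [set u; v].
Proof.
case/andP => /forallP /(_ e) /implyP H _ eM.
by apply/cards2P; apply: H.
Qed.

Lemma pm_Phi m (M : {set {set 'I_m}}) : perfect_matching M ->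
  exists f, pf setT f /\ M = Phi f.
Proof.
move=> pM.
have ex x : exists y, (y != x) && ([set x; y] \in M).
  have := pM; case/andP => _ /forallP /(_ x) /cards1P[e He].
  have : e \in [set e in M | x \in e] by rewrite He set11.
  rewrite inE => /andP[eM xe].
  have [u [v [uv ee]]] := pm_edge pM eM.
  move: xe; rewrite ee => /set2P[] ->.
    by exists v; rewrite eq_sym uv -ee eM.
  by exists u; rewrite uv setUC -ee eM.
pose f := [ffun x => odflt x [pick y | (y != x) && ([set x; y] \in M)]].
have fP x : (f x != x) && ([set x; f x] \in M).
  rewrite /f ffunE; case: pickP => [y //|H].
  by have [y] := ex x; rewrite H.
have ffx x : f (f x) = x.
  have /andP[fx1 fx2] := fP x; have /andP[fy1 fy2] := fP (f x).
  have e := pm_uniq pM fy2 fx2 (set21 _ _) (set22 _ _).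
  have : f (f x) \in [set x; f x] by rewrite -e set22.
  by case/set2P => // h; move: fy1; rewrite h eqxx.
have pff : pf setT f by apply/pfTP => x; have /andP[] := fP x; split => //; apply/eqP.
exists f; split => //; apply/setP => e; apply/idP/imsetP => [eM|[x _ ->]].
  have [u [v [uv ee]]] := pm_edge pM eM.
  have /andP[_ fu] := fP u.
  exists u => //; apply: (pm_uniq (x := u) pM eM fu); by rewrite ?ee set21.
by have /andP[] := fP x.
Qed.

Lemma Phi_inj m (f f' : {ffun 'I_m -> 'I_m}) : pf setT f -> pf setT f' ->
  Phi f = Phi f' -> f = f'.
Proof.
move=> /pfTP H /pfTP H' e; apply/ffunP => x.
have : [set x; f x] \in Phi f' by rewrite -e; apply: imset_f.
case/imsetP => y _ exy.
have : f x \in [set y; f' y] by rewrite -exy set22.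
have : x \in [set y; f' y] by rewrite -exy set21.
have [fxx _] := H x.
case/set2P => exy'; subst.
  by case/set2P => // h; move: fxx; rewrite h eqxx.
have [_ ->] := H' y; case/set2P => // h.
by move: fxx; rewrite h eqxx.
Qed.

Definition conjf m (g : {perm 'I_m}) (f : {ffun 'I_m -> 'I_m}) : {ffun 'I_m -> 'I_m} :=
  [ffun x => g (f (g^-1%g x))].

Lemma conjf_pf m g (f : {ffun 'I_m -> 'I_m}) : pf setT f -> pf setT (conjf g f).
Proof.
move=> /pfTP H; apply/pfTP => x; rewrite !ffunE permK.
have [h1 h2] := H (g^-1%g x); rewrite h2 permKV; split => //.
by apply: contra h1 => /eqP e; rewrite -{2}e permK.
Qed.

Lemma act_Phi m g (f : {ffun 'I_m -> 'I_m}) : act_chords g (Phi f) = Phi (conjf g f).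
Proof.
apply/setP => e; apply/imsetP/imsetP => [[e' /imsetP[x _ ->] ->]|[x _ ->]].
  exists (g x) => //; rewrite /conjf ffunE permK.
  by rewrite imsetU !imset_set1.
exists [set g^-1%g x; f (g^-1%g x)]; first exact: imset_f.
by rewrite imsetU !imset_set1 permKV ffunE.
Qed.

Lemma fix_count m (g : {perm 'I_m}) :
  #|[set M | perfect_matching M && (act_chords g M == M)]| = NN g setT.
Proof.
rewrite /NN -(card_in_imset (f := @Phi m)); last first.
  by move=> f f'; rewrite !inE => /andP[P _] /andP[P' _]; apply: Phi_inj.
apply: eq_card => M; rewrite inE; apply/andP/imsetP => [[pM /eqP fM]|[f]].
  have [f [P e]] := pm_Phi pM; exists f => //; rewrite inE P /=.
  apply/commbP => x.
  have : conjf g f = f by apply: Phi_inj (conjf_pf g P) P _; rewrite -act_Phi -e.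
  by move/ffunP => /(_ (g x)); rewrite ffunE permK => <-.
rewrite inE => /andP[P /commbP C] ->; split; first exact: Phi_pm.
rewrite act_Phi; apply/eqP; congr Phi; apply/ffunP => x.
by rewrite ffunE -C permKV.
Qed.
Local Open Scope group_scope.

Lemma rotE m (x : 'I_m) : val (rot m x) = x.+1 %% m.
Proof. by rewrite /rot permE. Qed.
Lemma reflE m (x : 'I_m) : val (refl m x) = (m - x) %% m.
Proof. by rewrite /refl permE. Qed.

Lemma rotX m k (x : 'I_m) : val ((rot m ^+ k) x) = (x + k) %% m.
Proof.
elim: k => [|k IH]; first by rewrite expg0 perm1 addn0 modn_small.
rewrite expgSr permM rotE IH -(addn1 ((x + k) %% m)) modnDml.
by rewrite -addnA addn1.
Qed.

Lemma refl_rev m (x : 'I_m) : rot m (refl m (rot m x)) = refl m x.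
Proof.
have xm := ltn_ord x.
apply: val_inj; rewrite /= rotE reflE rotE reflE.
case: (ltnP x.+1 m) => h.
  rewrite (modn_small h) (modn_small (m := m - x.+1)); last lia.
  by congr (_ %% m); lia.
have -> : x.+1 = m by lia.
by rewrite modnn subn0 modnn; congr (_ %% m); lia.
Qed.

Lemma reflK m : refl m * refl m = 1.
Proof.
apply/permP => x; rewrite permM perm1; apply: val_inj; rewrite /= !reflE.
have xm := ltn_ord x.
case: (posnP x) => h.
  by rewrite h subn0 modnn subn0 modnn.
rewrite (modn_small (m := m - x)); last lia.
rewrite modn_small; lia.
Qed.

Definition pres m (g : {perm 'I_m}) := [forall x, g (rot m x) == rot m (g x)].
Definition rev m (g : {perm 'I_m}) := [forall x, rot m (g (rot m x)) == g x].
Definition Dset m := [set g : {perm 'I_m} | pres g || rev g].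

Lemma Dset_group m : group_set (Dset m).
Proof.
apply/group_setP; split.
  by rewrite inE; apply/orP; left; apply/forallP => x; rewrite !perm1.
move=> g h; rewrite !inE => /orP[] /forallP G /orP[] /forallP H; apply/orP.
- by left; apply/forallP => x; rewrite !permM (eqP (G x)) (eqP (H _)).
- by right; apply/forallP => x; rewrite !permM (eqP (G x)) (eqP (H _)).
- by right; apply/forallP => x; rewrite !permM -(eqP (H _)) (eqP (G x)).
- by left; apply/forallP => x; rewrite !permM -(eqP (G x)) (eqP (H _)).
Qed.

Definition DG m : {group {perm 'I_m}} := Group (Dset_group m).

Lemma Dgrp_sub m : Dgrp m \subset Dset m.
Proof.
rewrite -[Dset m]/(gval (DG m)) gen_subG; apply/subsetP => g /set2P[]->; rewrite inE.
  by apply/orP; left; apply/forallP.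
by apply/orP; right; apply/forallP => x; rewrite refl_rev.
Qed.

Lemma rot_pow0 m (z : 'I_m) k : val z = 0 -> k < m -> val ((rot m ^+ k) z) = k.
Proof. by move=> z0 km; rewrite rotX z0 add0n modn_small. Qed.

Lemma pres_rot m (z : 'I_m) (g : {perm 'I_m}) : val z = 0 -> pres g -> g = rot m ^+ (g z).
Proof.
move=> z0 /forallP P.
have H k : g ((rot m ^+ k) z) = (rot m ^+ k) (g z).
  elim: k => [|k IH]; first by rewrite expg0 !perm1.
  by rewrite expgSr !permM (eqP (P _)) IH.
apply/permP => x.
have ex : x = (rot m ^+ x) z by apply: val_inj; rewrite rot_pow0.
by rewrite {1}ex H; apply: val_inj; rewrite !rotX addnC.
Qed.

Lemma rev_pres m (g : {perm 'I_m}) : rev g -> pres (g * refl m).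
Proof.
move=> /forallP R; apply/forallP => x; rewrite !permM.
by rewrite -(eqP (R x)) refl_rev.
Qed.

Lemma rotm m : rot m ^+ m = 1.
Proof.
apply/permP => x; apply: val_inj; rewrite perm1 rotX modnDr modn_small //.
Qed.

Definition phi m (u : 'I_m + 'I_m) : {perm 'I_m} :=
  match u with inl k => rot m ^+ k | inr k => rot m ^+ k * refl m end.

Lemma Dgrp_phi m : 0 < m -> Dgrp m = @phi m @: setT.
Proof.
move=> m0; pose z : 'I_m := Ordinal m0.
apply/eqP; rewrite eqEsubset; apply/andP; split; last first.
  apply/subsetP => _ /imsetP[[k|k] _ ->] /=.
    by rewrite groupX // mem_gen // set21.
  by rewrite groupM ?groupX // mem_gen // ?set21 ?set22.
apply/subsetP => g /(subsetP (Dgrp_sub m)); rewrite inE => /orP[P|R].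
  by apply/imsetP; exists (inl (g z)) => //=; apply: pres_rot.
apply/imsetP; exists (inr ((g * refl m) z)) => //=.
rewrite -(pres_rot (z := z)) //; last exact: rev_pres.
by rewrite -mulgA reflK mulg1.
Qed.

Lemma Cgrp_rot m : 0 < m -> Cgrp m = (fun k : 'I_m => rot m ^+ k) @: setT.
Proof.
move=> m0; apply/eqP; rewrite eqEsubset; apply/andP; split.
  apply/subsetP => g /cycleP[i ->]; apply/imsetP.
  exists (Ordinal (ltn_pmod i m0)) => //=.
  by rewrite expg_mod // rotm.
by apply/subsetP => _ /imsetP[k _ ->]; apply: mem_cycle.
Qed.

Lemma mod_cancel m a b c : a < m -> b < m -> (a + c) %% m = (b + c) %% m -> a = b.
Proof. by move=> am bm /eqP; rewrite eqn_modDr !modn_small // => /eqP. Qed.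

Lemma sig_id m k (x : 'I_m) : (val ((rot m ^+ k * refl m) x) + (x + k)) %% m = 0.
Proof.
have m0 : 0 < m := ord_pos x.
rewrite permM reflE rotX modnDml -modnDmr subnK ?modnn //.
exact: ltnW (ltn_pmod _ m0).
Qed.

Lemma sig_inv m k (x : 'I_m) :
  (rot m ^+ k * refl m) ((rot m ^+ k * refl m) x) = x.
Proof.
apply: val_inj; apply: (@mod_cancel m _ _ (val ((rot m ^+ k * refl m) x) + k));
  rewrite ?ltn_ord //.
by rewrite sig_id addnCA sig_id.
Qed.

Lemma sig_fix m k (x : 'I_m) :
  ((rot m ^+ k * refl m) x == x) = ((x.*2 + k) %% m == 0).
Proof.
apply/eqP/eqP => [e|e].
  by have := sig_id k x; rewrite e addnA addnn.
apply: val_inj; apply: (@mod_cancel m _ _ (x + k)); rewrite ?ltn_ord //.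
by rewrite sig_id addnA addnn e.
Qed.

Lemma phi_inj m : 2 < m -> injective (@phi m).
Proof.
move=> m2; have m0 : 0 < m by lia.
pose z : 'I_m := Ordinal m0.
have m1 : 1 < m by lia.
pose o : 'I_m := Ordinal m1.
have rinj (i j : 'I_m) : rot m ^+ i = rot m ^+ j -> i = j.
  move=> e; apply: val_inj; have := congr1 (fun g : {perm 'I_m} => val (g z)) e.
  by rewrite /= !rot_pow0.
have mix (i j : 'I_m) : rot m ^+ i <> rot m ^+ j * refl m.
  move=> e.
  have h0 := sig_id j z; have h1 := sig_id j o.
  rewrite -e rotX /= add0n (modn_small (ltn_ord i)) in h0.
  rewrite -e rotX /= in h1.
  move: h1; rewrite modnDml addnACA addnn /= -modnDmr h0 addn0 modn_small //.
move=> [i|i] [j|j] /= e.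
- by rewrite (rinj i j).
- by case: (mix i j).
- by case: (mix j i).
- by rewrite (rinj i j) // (mulIg _ _ _ e).
Qed.
Local Close Scope group_scope.

Lemma fix_odd n k x : odd k -> (2 * n %| x.*2 + k) = false.
Proof.
move=> ok; apply/negP => /(dvdn_trans (dvdn_mulr n (dvdnn 2))).
by rewrite dvdn2 oddD odd_double ok.
Qed.

Lemma fix_even n j x : 0 < n -> j < n -> x < 2 * n ->
  (2 * n %| x.*2 + j.*2) = (x == n - j) || (x == (2 * n - j) %% (2 * n)).
Proof.
move=> n0 jn xn; rewrite -doubleD -mul2n dvdn_pmul2l //.
apply/idP/idP.
  case/dvdnP => q e.
  have q3 : q < 3.
    have : q * n < 3 * n by rewrite -e; lia.
    by rewrite ltn_pmul2r.
  case: q q3 e => [|[|[|q]]] // _ e.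
  - have x0 : x = 0 by lia.
    have j0 : j = 0 by lia.
    by subst; rewrite !subn0 modnn eqxx orbT.
  - by apply/orP; left; apply/eqP; lia.
  - by apply/orP; right; rewrite modn_small; [apply/eqP; lia | lia].
case/orP => /eqP ->.
  by apply/dvdnP; exists 1; lia.
case: (posnP j) => [->|j0].
  by rewrite !subn0 modnn.
rewrite modn_small; last lia.
by apply/dvdnP; exists 2; lia.
Qed.

Lemma NN_sig n k : 0 < n -> k < 2 * n ->
  NN (rot (2 * n) ^+ k * refl (2 * n))%g setT = if odd k then K n else K n.-1.
Proof.
move=> n0 kn.
set s := (rot (2 * n) ^+ k * refl (2 * n))%g.
have sK : forall x, s (s x) = x by move=> x; apply: sig_inv.
have sfix x : (s x == x) = (2 * n %| x.*2 + k) by rewrite sig_fix.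
case: ifP => ok.
  apply: (NN_fpf sK) => //.
    by rewrite cardsT card_ord -mul2n.
  by move=> x _; rewrite sfix fix_odd.
have [j kj] : exists j, k = j.*2.
  by exists k./2; rewrite -{1}(odd_double_half k) ok.
have jn : j < n by lia.
have un : n - j < 2 * n by lia.
have vn : (2 * n - j) %% (2 * n) < 2 * n by apply: ltn_pmod; lia.
pose u : 'I_(2 * n) := Ordinal un.
pose v : 'I_(2 * n) := Ordinal vn.
have uv : u != v.
  rewrite -val_eqE /=; case: (posnP j) => [->|j0].
    by rewrite !subn0 modnn; lia.
  rewrite modn_small; lia.
have hfix x : (s x == x) = (x == u) || (x == v).
  by rewrite sfix kj fix_even // ?ltn_ord.
rewrite (@NN_two _ s setT u v) ?in_setT //; first last.
- by move=> x _ xu xv; rewrite hfix negb_or xu xv.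
- by apply/eqP; rewrite hfix eqxx orbT.
- by apply/eqP; rewrite hfix eqxx.
apply: (NN_fpf sK).
- rewrite cardsD setTI cards2 uv cardsT card_ord; lia.
- move=> x; rewrite !inE !andbT => /norP[xu xv]; apply/norP; split.
    by apply: contra xu => /eqP e; rewrite -(sK x) e hfix eqxx.
  by apply: contra xv => /eqP e; rewrite -(sK x) e hfix eqxx orbT.
- move=> x; rewrite !inE !andbT => /norP[xu xv]; rewrite hfix.
  by rewrite negb_or xu xv.
Qed.

Definition tt m k := 'C(m, k.*2) * 'C(k.*2, k) * k`!.

Lemma arith_tt (k m X Y Z a b c : nat) : k.*2.+1 * X = m.+1 * a ->
  k.+1 * Y = k.*2.+2 * Z -> k.+1 * Z = k.*2.+1 * b ->
  X * Y * (k.+1 * c) = m.+1.*2 * (a * b * c).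
Proof.
move=> hX hY hZ.
apply/eqP; rewrite -(eqn_pmul2l (_ : 0 < k.*2.+1 * k.+1)) //; apply/eqP.
have -> : k.*2.+1 * k.+1 * (X * Y * (k.+1 * c)) = (k.*2.+1 * X) * (k.+1 * Y) * (k.+1 * c).
  by ring.
rewrite hX hY.
have -> : m.+1 * a * (k.*2.+2 * Z) * (k.+1 * c) = m.+1 * a * k.*2.+2 * (k.+1 * Z) * c.
  by ring.
rewrite hZ -!mul2n; ring.
Qed.

Lemma ttS m k : tt m.+2 k.+1 = tt m.+1 k.+1 + (m.+1).*2 * tt m k.
Proof.
have key : 'C(m.+1, k.*2.+1) * 'C(k.*2.+2, k.+1) * (k.+1)`!
   = m.+1.*2 * ('C(m, k.*2) * 'C(k.*2, k) * k`!).
  rewrite factS; apply: arith_tt.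
  - by rewrite (mul_bin_diag m.+1 k.*2).
  - by rewrite -(mul_bin_diag k.*2.+2 k).
  - rewrite (mul_bin_down k.*2.+1 k); congr (_ * _); lia.
have e := binS m.+1 (k.*2).+1.
by rewrite /tt doubleS e 2!mulnDl key.
Qed.

Lemma tt_small m k : m < k.*2 -> tt m k = 0.
Proof. by move=> h; rewrite /tt bin_small. Qed.

Lemma tt0 m : tt m 0 = 1.
Proof. by rewrite /tt !bin0. Qed.

Definition TT m := \sum_(0 <= k < m.+1) tt m k.

Lemma TT_widen m N : m < N -> \sum_(0 <= k < N) tt m k = TT m.
Proof.
move=> mN; rewrite /TT (big_cat_nat (n := m.+1)) //= [X in _ + X]big1_seq ?addn0 //.
move=> k /andP[_]; rewrite mem_index_iota => /andP[h _]; apply: tt_small; lia.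
Qed.

Lemma TTS m : TT m.+2 = TT m.+1 + m.+1.*2 * TT m.
Proof.
rewrite {1}/TT big_nat_recl // tt0.
rewrite (eq_big_nat _ _ (F2 := fun k => tt m.+1 k.+1 + m.+1.*2 * tt m k)); last first.
  by move=> k _; rewrite ttS.
rewrite big_split /= -big_distrr /= addnA.
rewrite -(tt0 m.+1) -big_nat_recl // TT_widen // TT_widen //.
Qed.

Lemma K_TT p : K p = TT p.
Proof.
elim/ltn_ind: p => p IH.
case: p IH => [|[|p]] IH.
- by rewrite /TT big_nat1 tt0.
- by rewrite /TT !big_nat_recr //= big_nil /tt.
rewrite TTS -!IH //.
Qed.

Local Open Scope ring_scope.
Import GRing.Theory Num.Theory.

Lemma tt_fact m k : (k.*2 <= m)%N -> (tt m k * (k`! * (m - k.*2)`!))%N = m`!.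
Proof.
move=> km.
have h1 := @bin_fact k.*2 k (ltac:(lia)).
rewrite (_ : (k.*2 - k)%N = k) in h1; last lia.
have h2 := bin_fact km.
rewrite /tt -h2 -h1.
ring.
Qed.

Lemma kappa_TT m : kappa m = (TT m)%:R.
Proof.
rewrite /kappa (eq_big_nat _ _ (F2 := fun k => (tt m k)%:R)); last first.
  move=> k /andP[_ hk].
  have km : (k.*2 <= m)%N.
    have := odd_double_half m; move: hk; case: (odd m) => /=; lia.
  rewrite -(tt_fact km) natrM -[X in _ / X]natrM mulfK // pnatr_eq0 -lt0n muln_gt0 !fact_gt0 //=.
rewrite -natr_sum; congr (_%:R).
rewrite -(TT_widen (N := m.+1)) // [RHS](big_cat_nat (n := (m./2).+1)) //=; last first.
  have := odd_double_half m; case: (odd m) => /=; lia.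
rewrite [X in _ = (_ + X)%N]big1_seq ?addn0 //.
move=> k /andP[_]; rewrite mem_index_iota => /andP[h _]; apply: tt_small.
have := odd_double_half m; move: h; case: (odd m) => /=; lia.
Qed.
Local Close Scope ring_scope.

Definition to m := (('P^*)^*)%act : {action {perm 'I_m} &-> {set {set 'I_m}}}.
Lemma to_act m g M : to m M g = act_chords g M.
Proof. by []. Qed.

Definition PM m := [set M : {set {set 'I_m}} | perfect_matching M].

Lemma pm_act m (g : {perm 'I_m}) M : perfect_matching M -> perfect_matching (act_chords g M).
Proof. move=> /pm_Phi[f [P ->]]; rewrite act_Phi; apply: Phi_pm; exact: conjf_pf. Qed.

Lemma acts_PM m (G : {set {perm 'I_m}}) : [acts G, on PM m | to m].
Proof.
apply/subsetP => g _; apply/astabsP => M; rewrite !inE to_act.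
apply/idP/idP => [h|]; last exact: pm_act.
by have := pm_act (g^-1)%g h; rewrite -!to_act actK.
Qed.

Lemma fix_NN m (a : {perm 'I_m}) : #|('Fix_(PM m | to m)[a])%g| = NN a setT.
Proof.
rewrite -fix_count; apply: eq_card => M; rewrite !inE sub1set inE.
by rewrite to_act.
Qed.

Lemma burnside n (G : {group {perm 'I_(2 * n)}}) :
  (num_classes G * #|G|)%N = \sum_(a in G) NN a setT.
Proof.
rewrite -(eq_bigr _ (fun a _ => fix_NN a)) (Frobenius_Cauchy (acts_PM G)).
congr (_ * _)%N; rewrite /num_classes; congr #|_|.

Qed.

Lemma rot_inj m : 0 < m -> injective (fun k : 'I_m => (rot m ^+ k)%g).
Proof.
move=> m0 i j e; apply: val_inj.
pose z : 'I_m := Ordinal m0.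
by have := congr1 (fun g : {perm 'I_m} => val (g z)) e; rewrite /= !rot_pow0.
Qed.

Lemma sum_parity n A B : \sum_(0 <= k < n.*2) (if odd k then A else B) = n * (A + B).
Proof.
elim: n => [|n IH]; first by rewrite big_nil.
rewrite doubleS !big_nat_recr //= IH odd_double /=; ring.
Qed.

Lemma main_ge2 n : 1 < n -> (d_n n * 4 = c_n n * 2 + (K n + K n.-1))%N.
Proof.
move=> n2.
have m0 : 0 < 2 * n by lia.
have m2 : 2 < 2 * n by lia.
have n0 : 0 < n by lia.
have hC : (c_n n * #|Cgrp (2 * n)|)%N = \sum_(a in Cgrp (2 * n)) NN a setT :=
  burnside <<[set rot (2 * n)]>>%G.
have hD : (d_n n * #|Dgrp (2 * n)|)%N = \sum_(a in Dgrp (2 * n)) NN a setT :=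
  burnside <<[set rot (2 * n); refl (2 * n)]>>%G.
rewrite (Cgrp_rot m0) big_imset /= in hC; last by move=> i j _ _; apply: rot_inj.
rewrite card_imset in hC; last exact: rot_inj.
rewrite (Dgrp_phi m0) big_imset /= in hD; last by move=> i j _ _; apply: phi_inj.
rewrite card_imset in hD; last exact: phi_inj.
rewrite (eq_bigl predT) in hD; last by move=> u; rewrite in_setT.
rewrite (eq_bigl predT) in hC; last by move=> u; rewrite in_setT.
rewrite big_sumType /= in hD.
rewrite !cardsT card_sum card_ord in hC hD.
rewrite -hC in hD.
rewrite (eq_bigr (fun i : 'I_(2 * n) => if odd i then K n else K n.-1)) in hD; last first.
  by move=> i _; rewrite NN_sig.
rewrite -(big_mkord xpredT (fun i => if odd i then K n else K n.-1)) in hD.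
rewrite mul2n sum_parity -mul2n in hD.
apply/eqP; rewrite -(eqn_pmul2l n0); apply/eqP.
have -> : (n * (d_n n * 4) = d_n n * (2 * n + 2 * n))%N by ring.
by rewrite hD; ring.
Qed.

Lemma one_classes (G : {set {perm 'I_(2 * 1)}}) : num_classes G = 1.
Proof.
pose f0 := [ffun x : 'I_(2 * 1) => rot (2 * 1) x].
have P0 : pf setT f0.
  apply/pfTP => -[[|[|x]] hx] //; rewrite !ffunE; split;
    try (apply: val_inj; rewrite /= !rotE //); by rewrite -val_eqE /= rotE.
have uq f : pf setT f -> f = f0.
  move=> /pfTP H; apply/ffunP => x; apply: val_inj.
  have [h1 _] := H x; have [h2 _] := (pfTP _ P0) x.
  move: (ltn_ord x) (ltn_ord (f x)) (ltn_ord (f0 x)) h1 h2; rewrite -!val_eqE /=; lia.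
have E : [set M : {set {set 'I_(2 * 1)}} | perfect_matching M] = [set Phi f0].
  apply/setP => M; rewrite !inE; apply/idP/eqP => [/pm_Phi[f [P ->]]| ->].
    by rewrite (uq f P).
  exact: Phi_pm.
by rewrite /num_classes E imset_set1 cards1.
Qed.

Local Open Scope ring_scope.
Import GRing.Theory Num.Theory.

Theorem theorem3 (n : nat) (hn : (1 <= n)%N) :
  (d_n n)%:R = 2^-1 * ((c_n n)%:R + 2^-1 * (kappa n.-1 + kappa n)) :> rat.
Proof.
rewrite !kappa_TT -!K_TT.
case: n hn => [|[|n]] // _.
  by rewrite /d_n /c_n !one_classes /=; lra.
move: (main_ge2 (n := n.+2) isT).
move: (K n.+2) (K n.+2.-1) (d_n n.+2) (c_n n.+2) => a b d c E.
have E' : ((d * 4)%N%:R : rat) = ((c * 2 + (a + b))%N)%:R by rewrite E.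
rewrite !natrD !natrM in E'.
lra.
Qed.
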